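(* Let $(H,B_1,B_2)$ be a Rota-Baxter system of Hopf algebras with cocycle $\sigma$ and descendent Hopf algebra $H_{B_1,B_2}$ (with underlying space $H_1=\operatorname{Im}(\sigma)$), and let $A$ be a unital commutative algebra. Define $\Psi:\mathrm{Char}(H,A)\to\mathrm{Char}(H_{B_1,B_2},A)$ by $\Psi(f)(a)=f(a)$ for $a\in H_1$. Then $\Psi$ is a well-defined group homomorphism.
   Context: $\mathbb{F}$ is a field of characteristic $0$; Sweedler notation $\Delta(a)=a_1\otimes a_2$. A Rota-Baxter system of Hopf algebras is a triple $(H,B_1,B_2)$ with $(H,\cdot,1,\Delta,\epsilon,S)$ a cocommutative Hopf algebra, $B_1,B_2$ coalgebra homomorphisms with $B_1(1)=B_2(1)=1$, and for all $a,b\in H$: $B_1(a)B_1(b)=B_1(B_1(a_1)bS(B_2(a_2)))$, $B_2(a)B_2(b)=B_2(B_1(a_1)bS(B_2(a_2)))$. Descendent operation $a\circ b=B_1(a_1)bS(B_2(a_2))$, cocycle $\sigma(a)=B_1(a_1)S(B_2(a_2))$; $H_{B_1,B_2}$ is the Hopf algebra $H_1$ with product $\circ$, unit $1$, restricted $\Delta,\epsilon$, antipode $T(a)=S(B_1(a_1))B_2(a_2)$. Convolution: $(f\ast g)(a)=f(a_1)g(a_2)$. $\mathrm{Char}(H,A)$ is the group under $\ast$ of algebra homomorphisms $H\to A$; $\mathrm{Char}(H_{B_1,B_2},A)$ is the group under convolution (w.r.t. the coproduct of $H_1$) of algebra homomorphisms $(H_1,\circ,1)\to A$. *)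

(* Defs.v *)
(* Elements of H (x) H are represented by finite lists of
   pairs (sum of elementary tensors); two such lists are identified when they
   agree under every bilinear map into every F-vector space (universal
   property of the tensor product).  Same for H (x) H (x) H. *)
From HB Require Import structures.
From mathcomp Require Import all_boot all_order all_algebra.
Set Implicit Arguments. Unset Strict Implicit. Unset Printing Implicit Defensive.
Import Order.TTheory GRing.Theory Num.Theory.
Local Open Scope ring_scope.

Definition is_lin (F : fieldType) (U V : lmodType F) (f : U -> V) : Prop :=
  forall (k : F) (x y : U), f (k *: x + y) = k *: f x + f y.

Definition is_bilin (F : fieldType) (U W V : lmodType F) (b : U -> W -> V) : Prop :=
  (forall y, is_lin (fun x => b x y)) /\ (forall x, is_lin (b x)).

Definition is_trilin (F : fieldType) (U1 U2 U3 V : lmodType F)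
    (b : U1 -> U2 -> U3 -> V) : Prop :=
  (forall y z, is_lin (fun x => b x y z)) /\ (forall x z, is_lin (fun y => b x y z))
  /\ (forall x y, is_lin (b x y)).

Definition tens_eq (F : fieldType) (H : lmodType F) (s t : seq (H * H)) : Prop :=
  forall (V : lmodType F) (b : H -> H -> V), is_bilin b ->
    \sum_(p <- s) b p.1 p.2 = \sum_(p <- t) b p.1 p.2.

Definition tens3_eq (F : fieldType) (H : lmodType F) (s t : seq (H * H * H)) : Prop :=
  forall (V : lmodType F) (b : H -> H -> H -> V), is_trilin b ->
    \sum_(p <- s) b p.1.1 p.1.2 p.2 = \sum_(p <- t) b p.1.1 p.1.2 p.2.

Definition is_hopf (F : fieldType) (H : algType F) (Delta : H -> seq (H * H))
    (eps : H -> F) (S : H -> H) : Prop :=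
  [/\
      forall (k : F) (x y : H),
        tens_eq (Delta (k *: x + y)) ([seq (k *: p.1, p.2) | p <- Delta x] ++ Delta y),
      (* coassociativity *)
      forall a : H,
        tens3_eq [seq (p.1, q.1, q.2) | p <- Delta a, q <- Delta p.2]
                 [seq (q.1, q.2, p.2) | p <- Delta a, q <- Delta p.1],
      (forall (k : F) (x y : H), eps (k *: x + y) = k * eps x + eps y) /\
      (forall a : H, \sum_(p <- Delta a) eps p.1 *: p.2 = a /\
                     \sum_(p <- Delta a) eps p.2 *: p.1 = a),
      [/\ forall a b : H,
            tens_eq (Delta (a * b)) [seq (p.1 * q.1, p.2 * q.2) | p <- Delta a, q <- Delta b],
          tens_eq (Delta 1) [:: (1, 1)],
          forall a b : H, eps (a * b) = eps a * eps b
        & eps 1 = 1]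
    &
      is_lin S /\
      (forall a : H, \sum_(p <- Delta a) S p.1 * p.2 = eps a *: 1 /\
                     \sum_(p <- Delta a) p.1 * S p.2 = eps a *: 1)].

Definition is_cocommutative (F : fieldType) (H : algType F) (Delta : H -> seq (H * H)) : Prop :=
  forall a : H, tens_eq (Delta a) [seq (p.2, p.1) | p <- Delta a].

Definition is_coalg_hom (F : fieldType) (H : algType F) (Delta : H -> seq (H * H))
    (eps : H -> F) (B : H -> H) : Prop :=
  [/\ is_lin B,
      forall a : H, tens_eq (Delta (B a)) [seq (B p.1, B p.2) | p <- Delta a]
    & forall a : H, eps (B a) = eps a].

Definition desc_op (F : fieldType) (H : algType F) (Delta : H -> seq (H * H))
    (S B1 B2 : H -> H) (a b : H) : H :=
  \sum_(p <- Delta a) B1 p.1 * b * S (B2 p.2).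

Definition cocycle (F : fieldType) (H : algType F) (Delta : H -> seq (H * H))
    (S B1 B2 : H -> H) (a : H) : H :=
  \sum_(p <- Delta a) B1 p.1 * S (B2 p.2).

Definition is_RB_system (F : fieldType) (H : algType F) (Delta : H -> seq (H * H))
    (eps : H -> F) (S B1 B2 : H -> H) : Prop :=
  [/\ is_hopf Delta eps S, is_cocommutative Delta,
      is_coalg_hom Delta eps B1 /\ is_coalg_hom Delta eps B2,
      B1 1 = 1 /\ B2 1 = 1
    & forall a b : H,
        B1 a * B1 b = B1 (desc_op Delta S B1 B2 a b) /\
        B2 a * B2 b = B2 (desc_op Delta S B1 B2 a b)].

Definition inH1 (F : fieldType) (H : algType F) (Delta : H -> seq (H * H))
    (S B1 B2 : H -> H) (x : H) : Prop :=
  exists a : H, x = cocycle Delta S B1 B2 a.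

Definition conv (F : fieldType) (H : algType F) (A : algType F)
    (Delta : H -> seq (H * H)) (f g : H -> A) (a : H) : A :=
  \sum_(p <- Delta a) f p.1 * g p.2.

Definition is_char (F : fieldType) (H : algType F) (A : algType F) (f : H -> A) : Prop :=
  [/\ is_lin f, f 1 = 1 & forall a b : H, f (a * b) = f a * f b].

(* phi : H_1 -> A (given as the values of a map H -> A on H_1) is in
   Char(H_{B1,B2}, A): algebra homomorphism (H_1, o, 1) -> A *)
Definition is_desc_char (F : fieldType) (H : algType F) (A : algType F)
    (Delta : H -> seq (H * H)) (S B1 B2 : H -> H) (phi : H -> A) : Prop :=
  [/\ forall (k : F) (x y : H), inH1 Delta S B1 B2 x -> inH1 Delta S B1 B2 y ->
        phi (k *: x + y) = k *: phi x + phi y,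
      phi 1 = 1
    & forall x y : H, inH1 Delta S B1 B2 x -> inH1 Delta S B1 B2 y ->
        phi (desc_op Delta S B1 B2 x y) = phi x * phi y].

(* Psi(f) = restriction of f to H_1 (represented by f itself, read on H_1) *)
Definition Psi (F : fieldType) (H : algType F) (A : algType F) (f : H -> A) : H -> A := f.

(* Main.v *)
Require Import Defs.
From HB Require Import structures.
From mathcomp Require Import all_boot all_order all_algebra.
Import GRing.Theory.
Local Open Scope ring_scope.
Set Implicit Arguments. Unset Strict Implicit. Unset Printing Implicit Defensive.

Section Lin.
Variable F : fieldType.

Lemma linD (U V : lmodType F) (f : U -> V) (hf : is_lin f) x y : f (x + y) = f x + f y.
Proof. by have := hf 1 x y; rewrite !scale1r. Qed.

Lemma lin0 (U V : lmodType F) (f : U -> V) (hf : is_lin f) : f 0 = 0.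
Proof. by apply: (addrI (f 0)); rewrite addr0 -(linD hf) addr0. Qed.

Lemma linZ (U V : lmodType F) (f : U -> V) (hf : is_lin f) k x : f (k *: x) = k *: f x.
Proof. by have := hf k x 0; rewrite !addr0 (lin0 hf) addr0. Qed.

Lemma lin_sum (U V : lmodType F) (f : U -> V) (hf : is_lin f) I (r : seq I) (g : I -> U) :
  f (\sum_(i <- r) g i) = \sum_(i <- r) f (g i).
Proof.
elim: r => [|i r IH]; first by rewrite !big_nil (lin0 hf).
by rewrite !big_cons (linD hf) IH.
Qed.

Lemma lin_sumf (U V : lmodType F) I (r : seq I) (g : I -> U -> V) :
  (forall i, is_lin (g i)) -> is_lin (fun x => \sum_(i <- r) g i x).
Proof.
move=> hg k x y; rewrite scaler_sumr -big_split; apply: eq_bigr => i _; exact: hg.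
Qed.

Lemma lin_comp (U V W : lmodType F) (f : U -> V) (g : V -> W) :
  is_lin f -> is_lin g -> is_lin (fun x => g (f x)).
Proof. by move=> hf hg k x y; rewrite hf hg. Qed.

Lemma lin_mulr (R : algType F) (c : R) : is_lin (fun x : R => x * c).
Proof. by move=> k x y; rewrite mulrDl scalerAl. Qed.

Lemma lin_mull (R : algType F) (c : R) : is_lin (fun x : R => c * x).
Proof. by move=> k x y; rewrite mulrDr scalerAr. Qed.

End Lin.

Section Hopf.
Variables (F : fieldType) (H : algType F) (Delta : H -> seq (H * H)) (eps : H -> F) (S : H -> H).
Hypothesis hopf : is_hopf Delta eps S.
Hypothesis cocom : is_cocommutative Delta.

Definition E (V : lmodType F) (b : H -> H -> V) (w : H) : V := \sum_(p <- Delta w) b p.1 p.2.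

Lemma E_lin (V : lmodType F) (b : H -> H -> V) : is_bilin b -> is_lin (E b).
Proof.
move=> hb; case: hopf => hD _ _ _ _ k x y.
rewrite /E (hD k x y V b hb) big_cat big_map /= scaler_sumr.
congr (_ + _); apply: eq_bigr => p _; exact: (linZ (hb.1 p.2)).
Qed.

Lemma E_linp (U V : lmodType F) (G : U -> H -> H -> V) w :
  (forall a c, is_lin (fun u => G u a c)) -> is_lin (fun u => E (G u) w).
Proof. by move=> hG; apply: lin_sumf => p; apply: hG. Qed.

Lemma E_swap (V : lmodType F) (b : H -> H -> V) : is_bilin b ->
  forall a, E b a = E (fun u v => b v u) a.
Proof. by move=> hb a; have := cocom a; move/(_ V b hb); rewrite /E big_map. Qed.

Lemma E_mul (V : lmodType F) (b : H -> H -> V) : is_bilin b -> forall u v,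
  E b (u * v) = \sum_(q <- Delta u) \sum_(r <- Delta v) b (q.1 * r.1) (q.2 * r.2).
Proof.
move=> hb u v; case: hopf => _ _ _ [hm _ _ _] _.
by rewrite /E (hm u v V b hb) big_allpairs_dep.
Qed.

Lemma E_one (V : lmodType F) (b : H -> H -> V) : is_bilin b -> E b 1 = b 1 1.
Proof. by move=> hb; case: hopf => _ _ _ [_ h1 _ _] _; rewrite /E (h1 V b hb) big_seq1. Qed.

Lemma epsD x y : eps (x + y) = eps x + eps y.
Proof. by case: hopf => _ _ [he _] _ _; have := he 1 x y; rewrite scale1r mul1r. Qed.

Lemma eps0 : eps 0 = 0.
Proof. by apply: (addrI (eps 0)); rewrite addr0 -epsD addr0. Qed.

Lemma epsZ k x : eps (k *: x) = k * eps x.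
Proof. by case: hopf => _ _ [he _] _ _; have := he k x 0; rewrite !addr0 eps0 addr0. Qed.

Lemma eps_sum I (r : seq I) (g : I -> H) : eps (\sum_(i <- r) g i) = \sum_(i <- r) eps (g i).
Proof. exact: (big_morph eps epsD eps0). Qed.

Lemma counitL (V : lmodType F) (g : H -> V) : is_lin g -> forall a,
  \sum_(p <- Delta a) eps p.1 *: g p.2 = g a.
Proof.
move=> hg a; case: hopf => _ _ [_ hc] _ _; have [h1 _] := hc a.
transitivity (g (\sum_(p <- Delta a) eps p.1 *: p.2)); last by rewrite h1.
by rewrite (lin_sum hg); apply: eq_bigr => p _; rewrite (linZ hg).
Qed.

Lemma counitR (V : lmodType F) (g : H -> V) : is_lin g -> forall a,
  \sum_(p <- Delta a) eps p.2 *: g p.1 = g a.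
Proof.
move=> hg a; case: hopf => _ _ [_ hc] _ _; have [_ h1] := hc a.
transitivity (g (\sum_(p <- Delta a) eps p.2 *: p.1)); last by rewrite h1.
by rewrite (lin_sum hg); apply: eq_bigr => p _; rewrite (linZ hg).
Qed.

Lemma eps_counit a : \sum_(p <- Delta a) eps p.1 * eps p.2 = eps a.
Proof.
case: hopf => _ _ [_ hc] _ _; have [h1 _] := hc a.
by rewrite -{2}h1 eps_sum; apply: eq_bigr => p _; rewrite epsZ.
Qed.

Lemma antiL a : \sum_(p <- Delta a) S p.1 * p.2 = eps a *: 1.
Proof. by case: hopf => _ _ _ _ [_ h]; case: (h a). Qed.

Lemma antiR a : \sum_(p <- Delta a) p.1 * S p.2 = eps a *: 1.
Proof. by case: hopf => _ _ _ _ [_ h]; case: (h a). Qed.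

Lemma S_lin : is_lin S.
Proof. by case: hopf => _ _ _ _ []. Qed.

Lemma coassocE (V : lmodType F) (t : H -> H -> H -> V) : is_trilin t -> forall a,
  \sum_(p <- Delta a) \sum_(q <- Delta p.2) t p.1 q.1 q.2 =
  \sum_(p <- Delta a) \sum_(q <- Delta p.1) t q.1 q.2 p.2.
Proof.
move=> ht a; case: hopf => _ hco _ _ _; have := hco a V t ht.
by rewrite !big_allpairs_dep.
Qed.

Definition quadlin (V : lmodType F) (Q : H -> H -> H -> H -> V) :=
  [/\ forall x y z, is_lin (fun w => Q w x y z), forall w y z, is_lin (fun x => Q w x y z),
      forall w x z, is_lin (fun y => Q w x y z) & forall w x y, is_lin (Q w x y)].

Definition Bal (V : lmodType F) (Q : H -> H -> H -> H -> V) a :=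
  \sum_(p <- Delta a) \sum_(q <- Delta p.1) \sum_(s <- Delta p.2) Q q.1 q.2 s.1 s.2.

Definition Mid (V : lmodType F) (Q : H -> H -> H -> H -> V) a :=
  \sum_(p <- Delta a) \sum_(r <- Delta p.1) \sum_(q <- Delta r.2) Q r.1 q.1 q.2 p.2.

Lemma BalMid (V : lmodType F) (Q : H -> H -> H -> H -> V) : quadlin Q -> forall a,
  Bal Q a = Mid Q a.
Proof.
case=> h1 h2 h3 h4 a.
pose t x y z := E (fun u v => Q u v y z) x.
have ht : is_trilin t.
  split; [|split].
  - by move=> y z; apply: E_lin; split=> [y'|x']; [apply: h1|apply: h2].
  - by move=> x z; apply: E_linp => u v; apply: h3.
  - by move=> x y; apply: E_linp => u v; apply: h4.
transitivity (\sum_(p <- Delta a) \sum_(s <- Delta p.2) t p.1 s.1 s.2).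
  by apply: eq_bigr => p _; rewrite exchange_big.
rewrite (coassocE ht) /Mid; apply: eq_bigr => p _.
have ht' : is_trilin (fun x y z => Q x y z p.2).
  split; [|split]; [by move=> *; apply: h1|by move=> *; apply: h2|by move=> *; apply: h3].
by rewrite -(coassocE ht').
Qed.

Lemma P23 (V : lmodType F) (Q : H -> H -> H -> H -> V) : quadlin Q -> forall a,
  Bal Q a = Bal (fun w x y z => Q w y x z) a.
Proof.
move=> hQ a; have hQ' : quadlin (fun w x y z => Q w y x z).
  by case: hQ => h1 h2 h3 h4; split=> *; [apply: h1|apply: h3|apply: h2|apply: h4].
rewrite (BalMid hQ) (BalMid hQ'); apply: eq_bigr => p _; apply: eq_bigr => r _.
case: hQ => h1 h2 h3 h4.
have hb : is_bilin (fun u v => Q r.1 u v p.2).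
  by split=> *; [apply: h2|apply: h3].
exact: (E_swap hb r.2).
Qed.


Lemma bsuml (V : lmodType F) (b : H -> H -> V) (hb : is_bilin b) I (r : seq I) (g : I -> H) y :
  b (\sum_(i <- r) g i) y = \sum_(i <- r) b (g i) y.
Proof. exact: (lin_sum (hb.1 y)). Qed.

Lemma bsumr (V : lmodType F) (b : H -> H -> V) (hb : is_bilin b) I (r : seq I) (g : I -> H) x :
  b x (\sum_(i <- r) g i) = \sum_(i <- r) b x (g i).
Proof. exact: (lin_sum (hb.2 x)). Qed.

Lemma bscalel (V : lmodType F) (b : H -> H -> V) (hb : is_bilin b) k x y :
  b (k *: x) y = k *: b x y.
Proof. exact: (linZ (hb.1 y)). Qed.

Lemma bscaler (V : lmodType F) (b : H -> H -> V) (hb : is_bilin b) k x y :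
  b x (k *: y) = k *: b x y.
Proof. exact: (linZ (hb.2 x)). Qed.

Lemma E_scale (V : lmodType F) (b : H -> H -> V) (hb : is_bilin b) k x :
  E b (k *: x) = k *: E b x.
Proof. exact: (linZ (E_lin hb)). Qed.

Lemma E_sum (V : lmodType F) (b : H -> H -> V) (hb : is_bilin b) I (r : seq I) (g : I -> H) :
  E b (\sum_(i <- r) g i) = \sum_(i <- r) E b (g i).
Proof. exact: (lin_sum (E_lin hb)). Qed.

Lemma eps_id (V : lmodType F) (d : H -> H -> V) : is_bilin d -> forall h,
  Bal (fun x y z w => d (x * S z) (y * S w)) h = eps h *: d 1 1.
Proof.
move=> hd h; have hS := S_lin.
have hQ : quadlin (fun x y z w => d (x * S z) (y * S w)).
  split=> *.
  - exact: (lin_comp (lin_mulr _) (hd.1 _)).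
  - exact: (lin_comp (lin_mulr _) (hd.2 _)).
  - exact: (lin_comp (lin_comp hS (lin_mull _)) (hd.1 _)).
  - exact: (lin_comp (lin_comp hS (lin_mull _)) (hd.2 _)).
rewrite (P23 hQ) /Bal.
transitivity (\sum_(p <- Delta h) d (\sum_(q <- Delta p.1) q.1 * S q.2)
                                    (\sum_(s <- Delta p.2) s.1 * S s.2)).
  apply: eq_bigr => p _; rewrite (bsuml hd); apply: eq_bigr => q _.
  by rewrite (bsumr hd).
rewrite -(eps_counit h) scaler_suml; apply: eq_bigr => p _.
by rewrite !antiR (bscalel hd) (bscaler hd) scalerA.
Qed.

Lemma AL (V : lmodType F) (c : H -> H -> V) : is_bilin c -> forall w,
  E c (S w) = E (fun u v => c (S u) (S v)) w.
Proof.
move=> hc w; have hS := S_lin.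
have hL : is_lin (fun w => E c (S w)) := lin_comp hS (E_lin hc).
have hcS : is_bilin (fun u v => c (S u) (S v)).
  by split=> *; [apply: (lin_comp hS (hc.1 _))|apply: (lin_comp hS (hc.2 _))].
have hR := E_lin hcS.
pose d g u v := E (fun r1 r2 => c (r1 * u) (r2 * v)) (S g).
have hd : forall g, is_bilin (d g).
  move=> g; split=> y.
  - by apply: E_linp => a b; apply: (lin_comp (lin_mull _) (hc.1 _)).
  - by apply: E_linp => a b; apply: (lin_comp (lin_mull _) (hc.2 _)).
have he : forall a b, is_bilin (fun u v => c (u * S a) (v * S b)).
  by move=> a b; split=> *; [apply: (lin_comp (lin_mulr _) (hc.1 _))|
                             apply: (lin_comp (lin_mulr _) (hc.2 _))].
pose t g x y := E (fun a b => E (fun u v => c (u * S a) (v * S b)) (S g * x)) y.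
have ht : is_trilin t.
  split; [|split].
  - move=> x y; apply: E_linp => a b.
    exact: (lin_comp (lin_comp hS (lin_mulr x)) (E_lin (he a b))).
  - move=> g y; apply: E_linp => a b.
    exact: (lin_comp (lin_mull (S g)) (E_lin (he a b))).
  - move=> g x; apply: E_lin; split=> y'.
    + apply: E_linp => u v.
      exact: (lin_comp (lin_comp hS (lin_mull u)) (hc.1 _)).
    + apply: E_linp => u v.
      exact: (lin_comp (lin_comp hS (lin_mull v)) (hc.2 _)).
rewrite -(counitR hL w).
transitivity (\sum_(p <- Delta w) \sum_(p' <- Delta p.2) t p.1 p'.1 p'.2).
  apply: eq_bigr => p _.
  have -> : E c (S p.1) = d p.1 1 1.
    by rewrite /d /E; apply: eq_bigr => r _; rewrite !mulr1.
  rewrite -(eps_id (hd p.1)) /Bal; apply: eq_bigr => p' _.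
  transitivity (\sum_(s <- Delta p'.2) \sum_(r <- Delta (S p.1)) \sum_(q <- Delta p'.1)
     c (r.1 * q.1 * S s.1) (r.2 * q.2 * S s.2)).
    rewrite /d /E exchange_big; apply: eq_bigr => s _; rewrite exchange_big.
    by apply: eq_bigr => r _; apply: eq_bigr => q _; rewrite !mulrA.
  apply: eq_bigr => s _; symmetry; exact: (E_mul (he s.1 s.2) (S p.1) p'.1).
rewrite (coassocE ht) -(counitL hR w); apply: eq_bigr => p _.
rewrite /t /E exchange_big /= scaler_sumr; apply: eq_bigr => s _.
rewrite -/(E _ _) -(E_sum (he _ _)) antiL (E_scale (he _ _)) (E_one (he _ _)).
by rewrite !mul1r.
Qed.

End Hopf.

Section RB.
Variables (F : fieldType) (H : algType F) (Delta : H -> seq (H * H)) (eps : H -> F)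
  (S B1 B2 : H -> H).
Hypothesis hopf : is_hopf Delta eps S.
Hypothesis cocom : is_cocommutative Delta.
Hypothesis hB1 : is_coalg_hom Delta eps B1.
Hypothesis hB2 : is_coalg_hom Delta eps B2.

Lemma coalgE (B : H -> H) (hB : is_coalg_hom Delta eps B) (V : lmodType F)
  (b : H -> H -> V) (hb : is_bilin b) u :
  E Delta b (B u) = E Delta (fun x y => b (B x) (B y)) u.
Proof. by case: hB => _ hD _; have := hD u V b hb; rewrite big_map. Qed.

Lemma sigmaE (V : lmodType F) (b : H -> H -> V) (hb : is_bilin b) a :
  E Delta b (cocycle Delta S B1 B2 a) =
  \sum_(p <- Delta a) b (cocycle Delta S B1 B2 p.1) (cocycle Delta S B1 B2 p.2).
Proof.
have hS := S_lin hopf.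
have l1 : is_lin B1 by case: hB1.
have l2 : is_lin B2 by case: hB2.
rewrite /cocycle (E_sum hopf hb).
have hQ : quadlin (fun w x y z => b (B1 w * S (B2 y)) (B1 x * S (B2 z))).
  split=> *.
  - exact: (lin_comp (lin_comp l1 (lin_mulr _)) (hb.1 _)).
  - exact: (lin_comp (lin_comp l1 (lin_mulr _)) (hb.2 _)).
  - exact: (lin_comp (lin_comp l2 (lin_comp hS (lin_mull _))) (hb.1 _)).
  - exact: (lin_comp (lin_comp l2 (lin_comp hS (lin_mull _))) (hb.2 _)).
transitivity (Bal Delta (fun w x y z => b (B1 w * S (B2 y)) (B1 x * S (B2 z))) a).
  rewrite /Bal; apply: eq_bigr => p _.
  rewrite (E_mul hopf hb).
  pose b1 x y := E Delta (fun r1 r2 => b (x * r1) (y * r2)) (S (B2 p.2)).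
  have hb1 : is_bilin b1.
    split=> y.
    - by apply: E_linp => r1 r2; apply: (lin_comp (lin_mulr _) (hb.1 _)).
    - by apply: E_linp => r1 r2; apply: (lin_comp (lin_mulr _) (hb.2 _)).
  transitivity (E Delta b1 (B1 p.1)); first by [].
  rewrite (coalgE hB1 hb1); apply: eq_bigr => q _.
  have hbx : is_bilin (fun r1 r2 => b (B1 q.1 * r1) (B1 q.2 * r2)).
    by split=> *; [apply: (lin_comp (lin_mull _) (hb.1 _))|
                   apply: (lin_comp (lin_mull _) (hb.2 _))].
  rewrite /b1 /= (AL hopf cocom hbx).
  have hby : is_bilin (fun u v => b (B1 q.1 * S u) (B1 q.2 * S v)).
    by split=> *; [apply: (lin_comp (lin_comp hS (lin_mull _)) (hb.1 _))|
                   apply: (lin_comp (lin_comp hS (lin_mull _)) (hb.2 _))].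
  exact: (coalgE hB2 hby).
rewrite (P23 hopf cocom hQ) /Bal; apply: eq_bigr => p _.
rewrite (bsuml hb); apply: eq_bigr => q _; by rewrite (bsumr hb).
Qed.

End RB.

Theorem mainTheorem14 (F : fieldType) (char0 : [pchar F] =i pred0)
    (H : algType F) (Delta : H -> seq (H * H)) (eps : H -> F) (S B1 B2 : H -> H)
    (RB : is_RB_system Delta eps S B1 B2)
    (A : comAlgType F) :
  (* Psi is well defined: it maps Char(H,A) into Char(H_{B1,B2},A) *)
  (forall f : H -> A, is_char f -> is_desc_char Delta S B1 B2 (Psi f)) /\
  (* Psi is a group homomorphism for the convolution products *)
  (forall f g : H -> A, is_char f -> is_char g ->
     forall x : H, inH1 Delta S B1 B2 x ->
       Psi (conv Delta f g) x = conv Delta (Psi f) (Psi g) x).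
Proof.
case: RB => hopf cocom [hB1 hB2] [B11 B21] hRB.
split; last by [].
move=> f [hf f1 fM]; split; [by move=> k x y _ _; exact: hf | exact: f1 | ].
have l1 : is_lin B1 by case: hB1.
have l2 : is_lin B2 by case: hB2.
have hS := S_lin hopf.
have dsig u : desc_op Delta S B1 B2 u 1 = cocycle Delta S B1 B2 u.
  by rewrite /desc_op /cocycle; apply: eq_bigr => p _; rewrite mulr1.
have B1s u : B1 (cocycle Delta S B1 B2 u) = B1 u.
  by have [h _] := hRB u 1; rewrite -dsig -h B11 mulr1.
have B2s u : B2 (cocycle Delta S B1 B2 u) = B2 u.
  by have [_ h] := hRB u 1; rewrite -dsig -h B21 mulr1.
pose bb u v := f (B1 u) * f (S (B2 v)).
have hbb : is_bilin bb.
  split=> y.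
  - exact: (lin_comp (lin_comp l1 hf) (lin_mulr _)).
  - exact: (lin_comp (lin_comp (lin_comp l2 hS) hf) (lin_mull _)).
have fsig u : f (cocycle Delta S B1 B2 u) = E Delta bb u.
  by rewrite /cocycle (lin_sum hf); apply: eq_bigr => p _; rewrite fM.
have fdesc u y : f (desc_op Delta S B1 B2 u y) = f y * f (cocycle Delta S B1 B2 u).
  rewrite /desc_op /cocycle !(lin_sum hf) mulr_sumr; apply: eq_bigr => p _.
  by rewrite !fM mulrAC mulrC.
move=> x y [a ->] _; rewrite /Psi fdesc mulrC; congr (_ * _).
rewrite fsig (sigmaE hopf cocom hB1 hB2 hbb) fsig; apply: eq_bigr => p _.
by rewrite /bb B1s B2s.
Qed.
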